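(* Let $J,L\subseteq S$ with $n:=\#J\ge2$, $L\setminus\{l_1\}=J\setminus\{j_1,j_2\}$ and $j_1<l_1<j_2$. Then in $A$: $$\tau^-_J-(t_{j_2}t_{l_1}+t_{l_1}t_{j_2}-2q)\tau^-_{L\setminus\{l_1\}}-\tau^-_{\{j_1,j_2\}}\tau^-_L+\sum_{i=3}^n(-1)^{i+1}\tau^-_{(J\cup L)\setminus\{j_i\}}=0.$$
   Context: $S$ is a finite set with a total order $<$, $R$ a commutative ring with $1$, $q\in R$, $A=R\langle t_s\mid s\in S\rangle$ the free associative algebra. Subsets are enumerated increasingly: $J=\{j_1<\dots<j_{\#J}\}$, $L=\{l_1<\dots\}$. $t_J=t_{j_1}\cdots t_{j_{\#J}}$; for $I=\{j_{\alpha_1}<\dots<j_{\alpha_{\#I}}\}\subseteq J$, $\ell_J(I)=\sum_\nu(\alpha_\nu-\nu)$; $\tau^-_J=\sum_{I\subseteq J,\ \#I\text{ odd}}(-1)^{\ell_J(I)}(-q)^{(\#I-1)/2}t_{J\setminus I}$. *)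

(* Defs.v *)
From mathcomp Require Import all_boot all_order all_algebra.
Set Implicit Arguments. Unset Strict Implicit. Unset Printing Implicit Defensive.
Import Order.TTheory GRing.Theory.
Local Open Scope ring_scope.

Section TauMinus.
Variables (d : Order.disp_t) (S : finOrderType d).

Definition senum (J : {set S}) : seq S := sort <=%O (enum J).

(* l_J(I) = sum_nu (alpha_nu - nu), with I = {j_{alpha_1} < ... } ⊆ J
   (x = j_{alpha_nu} is the nu-th element of I; 0-based positions
   give the same differences) *)
Definition ellJ (J I : {set S}) : nat :=
  \sum_(x <- senum I) (index x (senum J) - index x (senum I))%N.
End TauMinus.

Section Alg.
Variables (d : Order.disp_t) (S : finOrderType d) (R : comPzRingType)
          (B : algType R) (t : S -> B).

Definition tJ (J : {set S}) : B := \prod_(j <- senum J) t j.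

Definition tauM (q : R) (J : {set S}) : B :=
  \sum_(I in powerset J | odd #|I|)
     (((-1) ^+ ellJ J I * (- q) ^+ (#|I|.-1)./2) *: tJ (J :\: I)).
End Alg.

(* Main.v *)
Require Import Defs.
From mathcomp Require Import all_boot all_order all_algebra.
Import Order.TTheory GRing.Theory.
Local Open Scope ring_scope.
Set Implicit Arguments. Unset Strict Implicit. Unset Printing Implicit Defensive.

Section Seqs.
Variables (d : Order.disp_t) (S : finOrderType d).
Implicit Types (J K I : {set S}) (x y z : S).

Lemma senum_lt J : sorted <%O (senum J).
Proof. by rewrite lt_sorted_uniq_le sort_uniq enum_uniq sort_le_sorted. Qed.

Lemma mem_senum J z : (z \in senum J) = (z \in J).
Proof. by rewrite mem_sort mem_enum. Qed.

Lemma senumU1 x K : (forall y, y \in K -> (x < y)%O) -> senum (x |: K) = x :: senum K.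
Proof.
move=> H; apply: lt_sorted_eq; first exact: senum_lt.
  rewrite /= lt_path_sortedE senum_lt andbT; apply/allP => y; rewrite mem_senum; exact: H.
by move=> z; rewrite mem_senum in_setU1 inE mem_senum.
Qed.

Lemma senumD1 x s K : senum K = x :: s -> senum (K :\ x) = s.
Proof.
move=> E; have := senum_lt K; rewrite E /= lt_path_sortedE => /andP [Ha Hs].
apply: lt_sorted_eq => //; first exact: senum_lt.
move=> z; rewrite mem_senum in_setD1 -mem_senum E inE.
case: eqP => [->|]; last by [].
by apply/esym/negP => /(allP Ha); rewrite ltxx.
Qed.

Lemma index_count s x : sorted <%O s -> x \in s -> index x s = count (fun z => (z < x)%O) s.
Proof.
elim: s => // y s IH /= Hp; have Hs := path_sorted Hp.
have Ha := lt_path_min Hp.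
rewrite inE => hx; case: (eqVneq y x) hx => [<-|ne] /= hx.
  rewrite ltxx add0n; apply/esym.
  by rewrite (@eq_in_count _ _ pred0) ?count_pred0 // => z /(allP Ha) h; rewrite /= lt_gtF.
have xs : x \in s by [].
rewrite IH //.
have yx : (y < x)%O by move: (allP Ha x xs).
by rewrite yx.
Qed.


Definition cnt J x := #|[set z in J | (z < x)%O]|.

Lemma count_senum J (p : pred S) : count p (senum J) = #|[set z in J | p z]|.
Proof.
have /permPl/permP -> := perm_sort <=%O (enum J).
rewrite -size_filter cardE; apply: perm_size.
apply: uniq_perm; first by rewrite filter_uniq ?enum_uniq.
  exact: enum_uniq.
by move=> z; rewrite mem_filter !mem_enum inE andbC.
Qed.

Lemma index_cnt J x : x \in J -> index x (senum J) = cnt J x.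
Proof. by move=> h; rewrite index_count ?senum_lt ?mem_senum // count_senum. Qed.

Lemma ellE J I : I \subset J -> ellJ J I = (\sum_(y in I) (cnt J y - cnt I y))%N.
Proof.
move=> sub; rewrite /ellJ {1}/senum (perm_big _ (introT permPl (perm_sort _ _))) big_enum.
apply: eq_bigr => y yI.
by rewrite -/(senum J) -/(senum I) !index_cnt // (subsetP sub).
Qed.

Lemma cnt_sub I J y : I \subset J -> (cnt I y <= cnt J y)%N.
Proof.
move=> sub; apply: subset_leq_card; apply/subsetP => z; rewrite !inE => /andP [h ->].
by rewrite (subsetP sub).
Qed.

Lemma cntU1 x K y : x \notin K -> cnt (x |: K) y = ((x < y)%O + cnt K y)%N.
Proof.
move=> nx; rewrite /cnt.
have -> : [set z in x |: K | (z < y)%O] = (if (x < y)%O then x |: [set z in K | (z < y)%O] else [set z in K | (z < y)%O]).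
  apply/setP => z; case: ifP => xy; rewrite !inE;
  by case: (eqVneq z x) => [->|] //=; rewrite ?xy ?(negbTE nx).
case: ifP => _ //; by rewrite cardsU1 inE (negbTE nx).
Qed.

End Seqs.

Section Alg.
Variables (d : Order.disp_t) (S : finOrderType d) (R : comPzRingType)
          (B : algType R) (t : S -> B) (q : R).
Implicit Types (J K I : {set S}) (x y z : S).

Definition P J (b : bool) : B :=
  \sum_(I in powerset J | odd #|I| == b)
     (((-1) ^+ ellJ J I * (- q) ^+ (#|I|./2)) *: tJ t (J :\: I)).

Definition lt_all x K := forall y, y \in K -> (x < y)%O.

Lemma lt_all_notin x K : lt_all x K -> x \notin K.
Proof. by move=> H; apply/negP => /H; rewrite ltxx. Qed.

Lemma lt_all_sub x K I : lt_all x K -> I \subset K -> lt_all x I.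
Proof. by move=> H s y yI; apply: H; apply: (subsetP s). Qed.

Lemma tJU1 x K : lt_all x K -> tJ t (x |: K) = t x * tJ t K.
Proof. by move=> H; rewrite /tJ senumU1 // big_cons. Qed.

Lemma sub_U1 x K I : x \notin I -> (I \subset x |: K) = (I \subset K).
Proof.
move=> nx; apply/idP/idP => h; apply/subsetP => z zI.
  have := subsetP h z zI; rewrite in_setU1; case: eqVneq => // ez.
  by rewrite -ez zI in nx.
by rewrite in_setU1 (subsetP h) ?orbT.
Qed.

Lemma cnt0 x K : lt_all x K -> cnt K x = 0%N.
Proof.
move=> H; apply/eqP; rewrite cards_eq0; apply/eqP/setP => z; rewrite !inE.
by case zK: (z \in K) => //=; rewrite lt_gtF // H.
Qed.

Lemma ell_out x K I : lt_all x K -> I \subset K ->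
  ellJ (x |: K) I = (ellJ K I + #|I|)%N.
Proof.
move=> H sub; have nx := lt_all_notin H.
rewrite !ellE //; last by rewrite sub_U1 // (contra (subsetP sub x)).
rewrite -sum1_card -big_split /=; apply: eq_bigr => y yI.
rewrite cntU1 // H ?(subsetP sub) // add1n subSn ?addn1 //.
exact: cnt_sub.
Qed.

Lemma ell_in x K I : lt_all x K -> I \subset K ->
  ellJ (x |: K) (x |: I) = ellJ K I.
Proof.
move=> H sub; have nx := lt_all_notin H.
have nxI : x \notin I by rewrite (contra (subsetP sub x)).
rewrite !ellE //; last by apply/subsetP => z; rewrite !in_setU1 => /orP [->|/(subsetP sub) ->]; rewrite ?orbT.
rewrite big_setU1 //= !cntU1 // ltxx !add0n cnt0 // (cnt0 (lt_all_sub H sub)) add0n.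
apply: eq_bigr => y yI; rewrite !cntU1 // H ?(subsetP sub) //.
Qed.


Lemma P_U1 x K b : lt_all x K ->
  P (x |: K) b = if b then P K false - t x * P K true
                 else t x * P K false - q *: P K true.
Proof.
move=> H; have nx := lt_all_notin H.
rewrite /P (bigID (fun I => x \in I)) /=.
have E2 : \sum_(I | (I \in powerset (x |: K)) && (odd #|I| == b) && (x \notin I))
   (((-1) ^+ ellJ (x |: K) I * (- q) ^+ (#|I|./2)) *: tJ t ((x |: K) :\: I))
        = (-1) ^+ b *: (t x * \sum_(I in powerset K | odd #|I| == b)
            (((-1) ^+ ellJ K I * (- q) ^+ (#|I|./2)) *: tJ t (K :\: I))).
  rewrite mulr_sumr scaler_sumr.
  rewrite (eq_bigl (fun I => (I \in powerset K) && (odd #|I| == b))); last first.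
    move=> I; rewrite !powersetE; case: (boolP (x \in I)) => xI /=.
      by rewrite andbF; apply/esym/andP => -[/subsetP/(_ x xI)]; rewrite (negbTE nx).
    by rewrite andbT sub_U1.
  apply: eq_bigr => I /andP [sub /eqP ob]; rewrite powersetE in sub.
  rewrite ell_out // exprD -[(-1) ^+ #|I|]signr_odd ob.
  have -> : (x |: K) :\: I = x |: (K :\: I).
    apply/setP => z; rewrite !inE; case: eqVneq => [->|] //=.
    by rewrite (contra (subsetP sub x)).
  rewrite tJU1; last by move=> y; rewrite inE => /andP [_ /H].
  by rewrite -scalerAr scalerA mulrAC [_ * (-1) ^+ b]mulrC.
have E1 : \sum_(I | (I \in powerset (x |: K)) && (odd #|I| == b) && (x \in I))
   (((-1) ^+ ellJ (x |: K) I * (- q) ^+ (#|I|./2)) *: tJ t ((x |: K) :\: I))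
        = (- q) ^+ (~~ b) *: \sum_(I in powerset K | odd #|I| == ~~ b)
            (((-1) ^+ ellJ K I * (- q) ^+ (#|I|./2)) *: tJ t (K :\: I)).
  rewrite scaler_sumr; apply/esym.
  rewrite (reindex_onto (fun I => I :\ x) (fun I => x |: I)); last first.
    move=> I /andP [sub _]; rewrite powersetE in sub.
    by rewrite setU1K // (contra (subsetP sub x)).
  apply: eq_big => [I|I].
    case: (boolP (x \in I)) => xI /=; last first.
      rewrite andbF; case E: (x |: (I :\ x) == I); last by rewrite andbF.
      by have := setU11 x (I :\ x); rewrite (eqP E) (negbTE xI).
    rewrite setD1K // eqxx andbT [in RHS]andbT !powersetE (cardsD1 x I) xI.
    have -> : (I :\ x \subset K) = (I \subset x |: K).
      apply/idP/idP => h; apply/subsetP => z.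
        by rewrite in_setU1; case: eqVneq => //= ne zI; rewrite (subsetP h) // !inE ne.
      rewrite !inE => /andP [ne zI]; have := subsetP h z zI; rewrite in_setU1 (negbTE ne) //.
    by rewrite add1n /=; case: (odd _); case: (b).
  move=> /andP [/andP [sub' ob] /eqP E]; rewrite powersetE in sub'.
  move: (I :\ x) E sub' ob => I' <- sub' ob.
  have nxI : x \notin I' by rewrite (contra (subsetP sub' x)).
  rewrite ell_in // cardsU1 nxI add1n.
  have -> : (x |: K) :\: (x |: I') = K :\: I'.
    apply/setP => z; rewrite !inE; case: eqVneq => [->|] //=.
    by rewrite (negbTE nx) andbF.
  rewrite scalerA /= uphalf_half (eqP ob) exprD.
  by rewrite mulrCA.
rewrite E1 E2; clear E1 E2; case: b => /=.
  by rewrite expr0 scale1r expr1 scaleN1r.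
by rewrite expr1 expr0 scale1r addrC scaleNr.
Qed.


Lemma senum0 : senum (set0 : {set S}) = [::].
Proof. by apply/nilP; rewrite /nilp size_sort -cardE cards0. Qed.

Lemma P0 b : P set0 b = if b then 0 else 1.
Proof.
rewrite /P powerset0 big_mkcondr big_set1 cards0 /= setDv /tJ senum0 big_nil.
rewrite /ellJ senum0 big_nil expr0 mul1r scale1r.
by case: b.
Qed.

Lemma P_U1f x K : lt_all x K ->
  P (x |: K) false = t x * P K false + (- q%:A) * P K true.
Proof. by move=> H; rewrite P_U1 // mulNr mulr_algl. Qed.

Lemma P_U1t x K : lt_all x K ->
  P (x |: K) true = 1 * P K false + (- t x) * P K true.
Proof. by move=> H; rewrite P_U1 // mul1r mulNr. Qed.

Lemma Dlem s K x0 : senum K = s ->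
  \sum_(m < size s) (-1) ^+ m *: P (K :\ nth x0 s m) false = P K true /\
  \sum_(m < size s) (-1) ^+ m *: P (K :\ nth x0 s m) true = 0.
Proof.
elim: s K => [|y s IH] K E.
  have -> : K = set0 by apply/setP => z; rewrite -mem_senum E inE.
  by rewrite !big_ord0 P0.
have yK : y \in K by rewrite -mem_senum E mem_head.
have E' := senumD1 E.
have Hp := senum_lt K; rewrite E /= in Hp.
have Hy : lt_all y (K :\ y).
  by move=> z; rewrite -mem_senum E' => /(allP (lt_path_min Hp)).
have KE : K = y |: (K :\ y) by rewrite setD1K.
have [IH1 IH2] := IH _ E'.
have Hk : forall m : 'I_(size s), K :\ nth x0 s m = y |: ((K :\ y) :\ nth x0 s m).
  move=> m; have ms : nth x0 s m \in s by apply: mem_nth.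
  have ny : nth x0 s m != y.
    by apply/eqP => ey; move: (allP (lt_path_min Hp) _ ms); rewrite ey ltxx.
  apply/setP => z; rewrite !inE; case: (eqVneq z y) => [->|] //=.
  by rewrite yK eq_sym ny.
have Hy' : forall m : 'I_(size s), lt_all y ((K :\ y) :\ nth x0 s m).
  by move=> m z; rewrite inE => /andP [_ /Hy].
rewrite !big_ord_recl /= !expr0 !scale1r; split.
  under eq_bigr => m _ do rewrite add0n /bump /= Hk P_U1f // exprS mulN1r scaleNr scalerDr !scalerAr.
  rewrite sumrN big_split /= -!mulr_sumr IH1 IH2 !mulr0 addr0.
  by rewrite [in RHS]KE P_U1t // mul1r mulNr.
under eq_bigr => m _ do rewrite add0n /bump /= Hk P_U1t // exprS mulN1r scaleNr scalerDr !scalerAr.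
rewrite sumrN big_split /= -!mulr_sumr IH1 IH2 !mulr0 addr0 mul1r.
by rewrite subrr.
Qed.


Lemma tauME J : tauM t q J = P J true.
Proof.
rewrite /tauM /P; apply: eq_big => I; first by rewrite eqb_id.
move=> /andP [_ oI]; congr (_ *: _); congr (_ * _); congr (_ ^+ _).
by case: #|I| oI => // n /= on; rewrite uphalf_half (negbTE on).
Qed.

Lemma lin2 (u1 u2 v1 v2 w1 w2 X Y : B) :
  w1 * (u1 * X + u2 * Y) + w2 * (v1 * X + v2 * Y)
  = (w1 * u1 + w2 * v1) * X + (w1 * u2 + w2 * v2) * Y.
Proof. by rewrite !mulrDr !mulrDl !mulrA addrACA. Qed.


Lemma ltU1 x y Y : (x < y)%O -> lt_all x Y -> lt_all x (y |: Y).
Proof. by move=> h H z; rewrite in_setU1 => /orP [/eqP ->|/H]. Qed.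

End Alg.

Lemma fin1 (B : pzRingType) (X Y Z V s u b : B) :
  X * s + Y * u - Z * u - X * (s - b * u) + V * u = (Y - Z + X * b + V) * u.
Proof.
rewrite mulrBr mulrA !mulrDl opprB !addrA mulNr.
by rewrite (ACl ((1*5)*2*3*4*6)) /= subrr add0r.
Qed.

Lemma fin2 (B : pzRingType) (a b c Q : B) :
  (- Q + a * c) - (c * b + b * c - (Q + Q)) + (c - a) * b + ((b - a) * c + (- Q + a * b)) = 0.
Proof.
rewrite !mulrBl !opprD ?opprB !opprK !addrA.
rewrite (ACl ((1*5)*(2*10)*(3*7)*(4*9)*(6*11)*(8*12))) /=.
by rewrite !(addNr, subrr, addr0, add0r).
Qed.

Theorem lemma3p4 (d : Order.disp_t) (S : finOrderType d) (R : comPzRingType)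
    (q : R) (B : algType R) (t : S -> B)
    (J L : {set S}) (j1 j2 l1 : S) :
  (2 <= #|J|)%N ->
  take 2 (senum J) = [:: j1; j2] ->
  ohead (senum L) = Some l1 ->
  L :\ l1 = (J :\ j1) :\ j2 ->
  (j1 < l1)%O -> (l1 < j2)%O ->
  tauM t q J
  - (t j2 * t l1 + t l1 * t j2 - (q *+ 2)%:A) * tauM t q (L :\ l1)
  - tauM t q [set j1; j2] * tauM t q L
  + \sum_(3 <= i < #|J|.+1)
      ((-1) ^+ (i.+1) *: tauM t q ((J :|: L) :\ nth j1 (senum J) i.-1))
  = 0.
Proof.
move=> hn ht hl hL h1 h2.
set s := drop 2 (senum J).
have EJ : senum J = j1 :: j2 :: s by rewrite -(cat_take_drop 2 (senum J)) ht.
set K := J :\ j1 :\ j2.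
have EJ1 := senumD1 EJ.
have EK : senum K = s := senumD1 EJ1.
have HpJ := senum_lt J; rewrite EJ /= in HpJ.
have /andP [h12 Hp2] := HpJ.
have HK2 : lt_all j2 K by move=> z; rewrite -mem_senum EK => /(allP (lt_path_min Hp2)).
have J1 : j1 \in J by rewrite -mem_senum EJ mem_head.
have J2 : j2 \in J :\ j1 by rewrite -mem_senum EJ1 mem_head.
have EJs : J = j1 |: (j2 |: K) by rewrite /K !setD1K.
case EL : (senum L) hl => [|l1' s'] //= [el]; rewrite el in EL.
have EL1 := senumD1 EL; rewrite hL -/K EK in EL1.
have L1 : l1 \in L by rewrite -mem_senum EL mem_head.
have ELs : L = l1 |: K by rewrite /K -hL setD1K.
have HpL := senum_lt L; rewrite EL -EL1 /= in HpL.
have HK1 : lt_all l1 K by move=> z; rewrite -mem_senum EK => /(allP (lt_path_min HpL)).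
have cJ : #|J| = (size s).+2 by rewrite cardE -(size_sort <=%O) -/(senum J) EJ.
rewrite !tauME hL -/K cJ.
rewrite -[3%N]/(0 + 3)%N big_addn big_mkord subSS subSS subn1 /=.
have HK1' : lt_all j1 K by move=> z /HK1; apply: lt_trans.
clearbody K.
have A3 k : lt_all j2 (K :\ k) by apply: (lt_all_sub HK2); apply: subD1set.
have A2 k : lt_all l1 (j2 |: (K :\ k)).
  by apply: ltU1 => //; apply: (lt_all_sub HK1); apply: subD1set.
have A1 k : lt_all j1 (l1 |: (j2 |: (K :\ k))).
  apply: ltU1 => //; apply: ltU1; first exact: lt_trans h2.
  by apply: (lt_all_sub HK1'); apply: subD1set.
have Hi : forall i : 'I_(size s), (-1) ^+ (i + 3).+1 *:
     tauM t q ((J :|: L) :\ nth j1 (senum J) (i + 3).-1)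
   = (-1) ^+ i *: P t q (j1 |: (l1 |: (j2 |: (K :\ nth j1 s i)))) true.
  move=> i; rewrite tauME -addnS exprD.
  have -> : (-1) ^+ 4 = 1 :> R by rewrite -signr_odd /= expr0.
  rewrite mulr1.
  congr (_ *: _); congr (P _ _ _ _).
  rewrite EJ !addnS /= addn0.
  have ks : nth j1 s i \in K by rewrite -mem_senum EK mem_nth.
  have hk2 := HK2 _ ks; have hk1 := HK1 _ ks; have hk0 := HK1' _ ks.
  apply/setP => z; rewrite {1}EJs {1}ELs !inE.
  case: (eqVneq z (nth j1 s i)) => [->|nzk] /=.
    by rewrite (gt_eqF hk2) (gt_eqF hk1) (gt_eqF hk0).
  by case: (z == j1); case: (z == j2); case: (z == l1); case: (z \in K).
under eq_bigr => i _ do rewrite Hi (P_U1t t q (A1 _)) (P_U1f t q (A2 _)) (P_U1t t q (A2 _))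
   (P_U1f t q (A3 _)) (P_U1t t q (A3 _)) !lin2 scalerDr !scalerAr.
rewrite big_split /= -!mulr_sumr.
have [D1 D2] := Dlem t q j1 EK.
rewrite D1 D2 mulr0 addr0.
have -> : [set j1; j2] = j1 |: (j2 |: set0) by rewrite setU0.
have B2 : lt_all j2 (set0 : {set S}) by move=> z; rewrite inE.
have B1 : lt_all j1 (j2 |: (set0 : {set S})) by apply: ltU1 => // z; rewrite inE.
have C1 : lt_all j1 (j2 |: K) by apply: ltU1.
rewrite (P_U1t t q B1) (P_U1f t q B2) (P_U1t t q B2) !P0.
rewrite {1}EJs (P_U1t t q C1) (P_U1f t q HK2) (P_U1t t q HK2) !lin2.
rewrite {1}ELs (P_U1t t q HK1).
set sg := P t q K false; set ta := P t q K true.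
rewrite !(mul1r, mulr1, mulr0, addr0, mulNr, mulrN, opprK).
rewrite fin1 -scalerMnl mulr2n.
by rewrite fin2 mul0r.
Qed.
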